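(* Consider the multiset combinatorial auction model described in the context, and an auction that first asks demand queries and then value queries, whose allocation after any set of reports is a solution of the winner determination problem (WDP) on the inferred values. In such an auction, adding value queries can reduce efficiency, and the efficiency drop can be arbitrarily close to $100\%$: for every $\delta>0$ there exist an instance, a finite set of demand queries with truthful responses after which the WDP allocation has efficiency $1$, and one value query per bidder (answered truthfully) such that, after adding these value-query responses, the WDP allocation has efficiency less than $\delta$.
   Context: Multiset combinatorial auction: bidders $N=\{1,\dots,n\}$, items $M=\{1,\dots,m\}$ with capacities $c\in\mathbb{N}^m$. Bundles are $x\in\mathcal{X}=\{0,\dots,c_1\}\times\cdots\times\{0,\dots,c_m\}$. Each bidder $i$ has a value function $v_i:\mathcal{X}\to\mathbb{R}_{\ge0}$. Feasible allocations: $\mathcal{F}=\{a\in\mathcal{X}^n:\sum_i a_{ij}\le c_j\ \forall j\}$. Social welfare $V(a)=\sum_i v_i(a_i)$; efficiency of $a$ is $V(a)/\max_{a'\in\mathcal{F}}V(a')$. A demand query at prices $p\in\mathbb{R}^m_{\ge0}$ is answered truthfully by bidder $i$ with some $x_i^*(p)\in\arg\max_{x\in\mathcal{X}}\{v_i(x)-\langle p,x\rangle\}$; a value query for $x$ is answered with $v_i(x)$. With reports $R_i$ consisting of demand responses $R_i^{DQ}$ (pairs $(x,p)$) and value responses $R_i^{VQ}$ (pairs $(x,v_i(x))$), the inferred value is $\tilde v_i(x;R_i)=v_i(x)$ if $x$ appears in $R_i^{VQ}$ and otherwise $\max(\{\langle x,p\rangle:(x,p)\in R_i^{DQ}\}\cup\{0\})$.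 The WDP allocation is $a^*(R)\in\arg\max_{a\in\mathcal{F}}\sum_i\tilde v_i(a_i;R_i)$. *)

(* Defs.v *)
From HB Require Import structures.
From mathcomp Require Import all_boot all_order all_algebra.
From mathcomp Require Import reals.
Set Implicit Arguments. Unset Strict Implicit. Unset Printing Implicit Defensive.
Import Order.TTheory GRing.Theory Num.Theory.
Local Open Scope ring_scope.

Section Auction.
Variable R : realType.

Definition bundle (m : nat) (c : 'I_m -> nat) := {dffun forall j : 'I_m, 'I_(c j).+1}.

(* prices p in R^m (nonnegativity imposed where required) *)
Definition price (m : nat) := {ffun 'I_m -> R}.

Variables (n m : nat) (c : 'I_m -> nat).

Definition pdot (p : price m) (x : bundle c) : R := \sum_(j < m) p j * (nat_of_ord (x j))%:R.

Definition allocation := {ffun 'I_n -> bundle c}.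
Definition feasible (a : allocation) : bool :=
  [forall j : 'I_m, (\sum_(i < n) nat_of_ord (a i j) <= c j)%N].

Definition welfare (w : 'I_n -> bundle c -> R) (a : allocation) : R := \sum_(i < n) w i (a i).

(* max over feasible allocations (values are >= 0, so 0 is a harmless default) *)
Definition opt_welfare (w : 'I_n -> bundle c -> R) : R :=
  \big[Num.max/0]_(a : allocation | feasible a) welfare w a.

Definition efficiency (v : 'I_n -> bundle c -> R) (a : allocation) : R :=
  welfare v a / opt_welfare v.

Definition valid_values (v : 'I_n -> bundle c -> R) := forall i x, 0 <= v i x.

Definition truthful_demand (vi : bundle c -> R) (r : bundle c * price m) :=
  (forall j, 0 <= r.2 j) /\ forall y : bundle c, vi y - pdot r.2 y <= vi r.1 - pdot r.2 r.1.

(* inferred value: value reports are truthful (the report of x is vi x), so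
   R_i^{VQ} is represented by the list of queried bundles *)
Definition inferred (vi : bundle c -> R) (dq : seq (bundle c * price m))
    (vq : seq (bundle c)) (x : bundle c) : R :=
  if x \in vq then vi x
  else \big[Num.max/0]_(r <- dq | r.1 == x) pdot r.2 x.

Definition wdp_solution (w : 'I_n -> bundle c -> R) (a : allocation) :=
  feasible a /\ forall a' : allocation, feasible a' -> welfare w a' <= welfare w a.

End Auction.

(* Main.v *)
Require Import Defs.
From HB Require Import structures.
From mathcomp Require Import all_boot all_order all_algebra.
From mathcomp Require Import reals.
From mathcomp Require Import lra.
Import Order.TTheory GRing.Theory Num.Theory.
Local Open Scope ring_scope.

Definition c1 : 'I_1 -> nat := fun _ => 1%N.
Definition top : bundle c1 := [ffun j => (ord_max : 'I_(c1 j).+1)].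
Definition bot : bundle c1 := [ffun j => (ord0 : 'I_(c1 j).+1)].
Lemma top_bot : top != bot.
Proof. apply/eqP => /(congr1 (fun f : bundle c1 => f ord0)); rewrite !ffunE. by []. Qed.
Lemma feas (a : allocation 1 c1) : feasible a.
Proof. apply/forallP => j; rewrite big_ord1; exact: (ltn_ord (a ord0 j)). Qed.

Lemma welfare1 (R : realType) (w : 'I_1 -> bundle c1 -> R) a :
  welfare w a = w ord0 (a ord0).
Proof. by rewrite /welfare big_ord1. Qed.

Lemma opt1 (R : realType) (w : 'I_1 -> bundle c1 -> R) :
  (forall x, w ord0 x <= 1) -> w ord0 top = 1 -> opt_welfare w = 1.
Proof.
move=> H1 Ht; apply/le_anti/andP; split.
  rewrite /opt_welfare; elim/big_ind: _ => //.
  - move=> x y hx hy; by rewrite ge_max hx hy.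
  - by move=> a _; rewrite welfare1.
rewrite /opt_welfare (bigD1 [ffun _ => top]) ?feas //=.
by rewrite le_max welfare1 ffunE Ht lexx.
Qed.

Theorem lemmaD7 (R : realType) (delta : R) : 0 < delta ->
  exists (n m : nat) (c : 'I_m -> nat) (v : 'I_n -> bundle c -> R)
         (dq : 'I_n -> seq (bundle c * price R m)) (vq : 'I_n -> bundle c),
    [/\ valid_values v,
        (forall i r, r \in dq i -> truthful_demand (v i) r),
        (forall a : allocation n c,
            wdp_solution (fun i => inferred (v i) (dq i) [::]) a ->
            efficiency v a = 1) &
        (forall a : allocation n c,
            wdp_solution (fun i => inferred (v i) (dq i) [:: vq i]) a ->
            efficiency v a < delta)].
Proof.
move=> dpos.
set mu := Num.min delta 1.
have mud : mu <= delta by rewrite ge_min lexx.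
have mu1 : mu <= 1 by rewrite ge_min lexx orbT.
have mu0 : 0 < mu by rewrite lt_min dpos ltr01.
set eps := mu / 2.
have e0 : 0 < eps by rewrite /eps divr_gt0.
have ed : eps < delta by rewrite /eps; lra.
have e1 : eps <= 1 / 2 by rewrite /eps; lra.
pose v : 'I_1 -> bundle c1 -> R := fun _ x => if x == top then 1 else eps.
pose p : price R 1 := [ffun _ => eps / 2].
have pdp : forall y : bundle c1, 0 <= pdot p y.
  move=> y; rewrite /pdot big_ord1 ffunE; apply: mulr_ge0; last exact: ler0n.
  lra.
have pdtop : pdot p top = eps / 2.
  by rewrite /pdot big_ord1 !ffunE /= mulr1.
have vle1 : forall x, v ord0 x <= 1.
  by move=> x; rewrite /v; case: ifP => _ //; lra.
have opt : opt_welfare v = 1 by apply: opt1 => //; rewrite /v eqxx.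
have infD : forall x, inferred (v ord0) [:: (top, p)] [::] x =
                       if x == top then eps / 2 else 0.
  move=> x; rewrite /inferred in_nil big_cons big_nil /=.
  case: (boolP (x == top)) => [/eqP ->|ne].
    by rewrite (_ : (top == top) = true); [rewrite pdtop max_l //; lra | apply/eqP].
  by rewrite (_ : (top == x) = false) //; apply/negbTE; rewrite eq_sym.
exists 1%N, 1%N, c1, v, (fun _ => [:: (top, p)]), (fun _ => bot).
split.
- move=> i x; rewrite /v; case: ifP => _; lra.
- move=> i r; rewrite inE => /eqP -> ; split => [j|y] /=.
    rewrite ffunE; lra.
  rewrite pdtop /v eqxx; have := pdp y; case: eqP => [->|_]; rewrite ?pdtop; lra.
- move=> a [_ Hw]; rewrite /efficiency opt divr1 welfare1.
  have := Hw [ffun _ => top] (feas _).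
  rewrite !welfare1 ffunE.
  rewrite !infD /v; case: (a ord0 =P top) => [_ //|_].
  rewrite (_ : (top == top) = true); [lra | exact/eqP].
- move=> a [_ Hw]; rewrite /efficiency opt divr1 welfare1.
  have := Hw [ffun _ => bot] (feas _).
  have tb : (top == bot) = false by apply/negbTE; exact: top_bot.
  have bt : (bot == top) = false by rewrite eq_sym.
  have bb : (bot == bot) = true by apply/eqP.
  have tt : (top == top) = true by apply/eqP.
  rewrite !welfare1 ffunE /inferred !mem_seq1 bb.
  case: (a ord0 =P top) => [->|ne]; last first.
    by move=> _; rewrite /v; case: eqP.
  rewrite tb big_cons big_nil /= tt pdtop max_l; last lra.
  rewrite /v bt tt; lra.
Qed.
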